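(* Let $n=2^m$, and let $\mathbf{G}_n^{\mathrm{ABS+}}$ be an ABS+ encoding matrix of size $n$, specified by the sets $\mathcal{I}_S^{(N)},\mathcal{I}_A^{(N)}$ for $N=2,4,\dots,n$. Then for any $u\in\{0,1\}^n$, the codeword $u\,\mathbf{G}_n^{\mathrm{ABS+}}$ can be computed (layer by layer, applying for $N=n,n/2,\dots,2$ the transforms of $\mathbf{Q}_N$ and then the $2\times 2$ polar transforms to the appropriate strided subvectors) using $O(n\log n)$ elementary bit operations.
   Context: $\mathbf{G}_2^{\mathrm{polar}}=\begin{bmatrix}1&0\\1&1\end{bmatrix}$, $\otimes$ is the Kronecker product, arithmetic over $\mathbb{F}_2$. For $1\le i\le N-1$, $\mathbf{S}_N^{(i)}$ (resp. $\mathbf{A}_N^{(i)}$) is the $N\times N$ binary matrix such that $u\mapsto u\mathbf{S}_N^{(i)}$ (resp. $u\mapsto u\mathbf{A}_N^{(i)}$) fixes all coordinates other than $u_i,u_{i+1}$ and maps $(u_i,u_{i+1})$ to $(u_{i+1},u_i)$ (resp. to $(u_i+u_{i+1},u_{i+1})$). ABS+ encoding matrices: $\mathbf{G}_2^{\mathrm{ABS+}}=\mathbf{Q}_2\mathbf{G}_2^{\mathrm{polar}}$ with $\mathbf{Q}_2=\mathbf{I}_2$, and for $N=4,8,\dots$, $\mathbf{G}_N^{\mathrm{ABS+}}=\mathbf{Q}_N(\mathbf{G}_{N/2}^{\mathrm{ABS+}}\otimes\mathbf{G}_2^{\mathrm{polar}})$ where $\mathbf{Q}_N=\big(\prod_{i\in\mathcal{I}_S^{(N)}}\mathbf{S}_N^{(i)}\big)\big(\prod_{i\in\mathcal{I}_A^{(N)}}\mathbf{A}_N^{(i)}\big)$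 for disjoint sets $\mathcal{I}_S^{(N)},\mathcal{I}_A^{(N)}\subseteq\{1,\dots,N-1\}$ of even integers whose union $\{i_1<\dots<i_t\}$ satisfies $i_{s+1}\ge i_s+4$. *)

(* Defs.v *)
From mathcomp Require Import all_boot all_order all_algebra.
Set Implicit Arguments. Unset Strict Implicit. Unset Printing Implicit Defensive.
Import GRing.Theory.
Local Open Scope ring_scope.

Lemma ord_div_proof m n (i : 'I_(m * n)) : (i %/ n < m)%N.
Proof.
case: n i => [|n] [i Hi] /=; first by rewrite muln0 in Hi.
by rewrite ltn_divLR.
Qed.
Lemma ord_mod_proof m n (i : 'I_(m * n)) : (i %% n < n)%N.
Proof.
case: n i => [|n] [i Hi] /=; first by rewrite muln0 in Hi.
by rewrite ltn_mod.
Qed.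
Definition ord_div m n (i : 'I_(m * n)) : 'I_m := Ordinal (ord_div_proof i).
Definition ord_mod m n (i : 'I_(m * n)) : 'I_n := Ordinal (ord_mod_proof i).

Definition kron (R : pzSemiRingType) m1 n1 m2 n2
    (A : 'M[R]_(m1, n1)) (B : 'M[R]_(m2, n2)) : 'M[R]_(m1 * m2, n1 * n2) :=
  \matrix_(i, j) (A (ord_div i) (ord_div j) * B (ord_mod i) (ord_mod j)).

Definition Gpolar : 'M['F_2]_2 :=
  \matrix_(i < 2, j < 2) (((i : nat) == j) || ((i : nat) == 1%N))%:R.

(* Paper coordinates are 1-based: u_1..u_N; Rocq coordinate k : 'I_N is u_{k+1}.
   S_N^(i): u |-> u S swaps u_i and u_{i+1} (0-based: i-1 and i). *)
Definition swap_idx (i j : nat) : nat :=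
  if j == i.-1 then i else if j == i then i.-1 else j.
Definition Smx (N i : nat) : 'M['F_2]_N :=
  \matrix_(k, j) ((k : nat) == swap_idx i j)%:R.
(* A_N^(i): u |-> u A maps (u_i, u_{i+1}) to (u_i + u_{i+1}, u_{i+1}). *)
Definition Amx (N i : nat) : 'M['F_2]_N :=
  \matrix_(k, j) (((k : nat) == j) || (((j : nat) == i.-1) && ((k : nat) == i)))%:R.

(* Q_N = (prod_{i in I_S} S_N^(i)) (prod_{i in I_A} A_N^(i)), products in increasing
   order of i; IS N, IA N are the sets I_S^(N), I_A^(N) as predicates on nat. *)
Definition Qmx (IS IA : nat -> pred nat) (N : nat) : 'M['F_2]_N :=
  foldr (fun i M => Smx N i *m M) 1%:M [seq i <- iota 1 N.-1 | IS N i] *m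
  foldr (fun i M => Amx N i *m M) 1%:M [seq i <- iota 1 N.-1 | IA N i].

(* G_{2^k}^{ABS+}; the base case G_1 := I_1 makes G_2 = Q_2 (I_1 \otimes G_2^polar)
   = Q_2 G_2^polar, as in the paper. *)
Fixpoint abs_mx (IS IA : nat -> pred nat) (k : nat) : 'M['F_2]_(2 ^ k) :=
  match k with
  | 0 => 1%:M
  | k'.+1 =>
      Qmx IS IA (2 ^ k'.+1) *m
      castmx (esym (expnSr 2 k'), esym (expnSr 2 k'))
             (kron (abs_mx IS IA k') Gpolar)
  end.

Definition abs_valid (IS IA : nat -> pred nat) (m : nat) : Prop :=
  forall k, (1 <= k <= m)%N ->
    let N := (2 ^ k)%N in
    (forall i, IS N i -> [&& 1 <= i, i <= N.-1 & ~~ odd i]%N) /\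
    (forall i, IA N i -> [&& 1 <= i, i <= N.-1 & ~~ odd i]%N) /\
    (forall i, ~~ (IS N i && IA N i)) /\
    (forall i j, IS N i || IA N i -> IS N j || IA N j -> (i < j)%N -> (i + 4 <= j)%N).

(* XorI i j : x_i <- x_i + x_j ;  SwapI i j : exchange x_i and x_j. Each costs 1. *)
Inductive bitop (n : nat) : Type :=
| XorI of 'I_n & 'I_n
| SwapI of 'I_n & 'I_n.

Definition step n (x : 'rV['F_2]_n) (o : bitop n) : 'rV['F_2]_n :=
  match o with
  | XorI i j => \row_k (if k == i then x 0 i + x 0 j else x 0 k)
  | SwapI i j => \row_k x 0 (if k == i then j else if k == j then i else k)
  end.

Definition run n (p : seq (bitop n)) (x : 'rV['F_2]_n) : 'rV['F_2]_n := foldl (@step n) x p.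

(* Main.v *)
Require Import Defs.
Set Warnings "-notation-overridden,-ambiguous-paths".
From mathcomp Require Import all_boot all_order all_algebra.
From mathcomp Require Import zify.
Set Implicit Arguments. Unset Strict Implicit. Unset Printing Implicit Defensive.
Import GRing.Theory.
Local Open Scope ring_scope.

Definition computes n (p : seq (bitop n)) (M : 'M['F_2]_n) :=
  forall u, run p u = u *m M.

Lemma run_cons n o (p : seq (bitop n)) x : run (o :: p) x = run p (step x o).
Proof. by []. Qed.

Lemma run_cat n (p q : seq (bitop n)) x : run (p ++ q) x = run q (run p x).
Proof. by rewrite /run foldl_cat. Qed.

Lemma step_lin n (o : bitop n) a x y : step (a *: x + y) o = a *: step x o + step y o.
Proof.
case: o => i j; apply/rowP => k; rewrite /= !mxE //.
case: ifP => _; rewrite ?mxE //.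
by rewrite mulrDr addrACA.
Qed.

Lemma step0 n (o : bitop n) : step 0 o = 0.
Proof. by case: o => i j; apply/rowP => k; rewrite /= !mxE //; case: ifP; rewrite ?mxE ?addr0. Qed.

Lemma run_lin n (p : seq (bitop n)) a x y : run p (a *: x + y) = a *: run p x + run p y.
Proof. by elim: p x y => [//|o p IH] x y; rewrite !run_cons step_lin IH. Qed.

Lemma run0 n (p : seq (bitop n)) : run p 0 = 0.
Proof. by elim: p => [//|o p IH]; rewrite run_cons step0. Qed.

Lemma computes_basis n (p : seq (bitop n)) M :
  (forall i, run p (delta_mx 0 i) = delta_mx 0 i *m M) -> computes p M.
Proof.
move=> H u.
have Hadd : {morph run p : x y / x + y}.
  by move=> x y /=; have := run_lin p 1 x y; rewrite !scale1r.
transitivity (\sum_(j < n) u 0 j *: (delta_mx 0 j *m M) : 'rV_n).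
  rewrite {1}(row_sum_delta u) (big_morph (run p) Hadd (run0 p)).
  by apply: eq_bigr => j _; rewrite -[_ *: _]addr0 run_lin run0 addr0 H.
by rewrite {2}(row_sum_delta u) mulmx_suml; apply: eq_bigr => j _; rewrite scalemxAl.
Qed.

Lemma computes_cat n (p q : seq (bitop n)) A B :
  computes p A -> computes q B -> computes (p ++ q) (A *m B).
Proof. by move=> hA hB u; rewrite run_cat hB hA mulmxA. Qed.

Lemma computes_nil n : computes ([::] : seq (bitop n)) 1%:M.
Proof. by move=> u; rewrite mulmx1. Qed.

Lemma computes_foldr n (opf : nat -> seq (bitop n)) (matf : nat -> 'M_n) s :
  (forall i, i \in s -> computes (opf i) (matf i)) ->
  computes (flatten (map opf s)) (foldr (fun i M => matf i *m M) 1%:M s).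
Proof.
elim: s => [|i s IH] H /=; first exact: computes_nil.
apply: computes_cat; first by apply: H; rewrite inE eqxx.
by apply: IH => j hj; apply: H; rewrite inE hj orbT.
Qed.

Lemma size_flatten_le n (opf : nat -> seq (bitop n)) s :
  (forall i, size (opf i) <= 1)%N -> (size (flatten (map opf s)) <= size s)%N.
Proof.
move=> H; elim: s => [//|i s IH] /=; rewrite size_cat.
by have := H i; lia.
Qed.

Definition sop N i : seq (bitop N) :=
  match (insub i.-1 : option 'I_N), (insub i : option 'I_N) with
  | Some a, Some b => [:: SwapI a b] | _, _ => [::] end.
Definition aop N i : seq (bitop N) :=
  match (insub i.-1 : option 'I_N), (insub i : option 'I_N) with
  | Some a, Some b => [:: XorI a b] | _, _ => [::] end.

Lemma size_sop N i : (size (sop N i) <= 1)%N.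
Proof. by rewrite /sop; case: (insub i.-1 : option 'I_N) => [a|]; case: (insub i : option 'I_N). Qed.
Lemma size_aop N i : (size (aop N i) <= 1)%N.
Proof. by rewrite /aop; case: (insub i.-1 : option 'I_N) => [a|]; case: (insub i : option 'I_N). Qed.

Lemma sop_ok N i : (0 < i < N)%N -> computes (sop N i) (Smx N i).
Proof.
case/andP=> i0 iN; rewrite /sop.
case: insubP => [a _ ha|]; last by lia.
case: insubP => [b _ hb|]; last by lia.
apply: computes_basis => k; rewrite -rowE; apply/rowP => j.
rewrite run_cons /= !mxE /swap_idx -ha -hb.
rewrite eqxx /= -!val_eqE !(fun_if val) /=.
by case: ifP => _; try case: ifP => _; rewrite eq_sym.
Qed.

Lemma aop_ok N i : (0 < i < N)%N -> computes (aop N i) (Amx N i).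
Proof.
case/andP=> i0 iN; rewrite /aop.
case: insubP => [a _ ha|]; last by lia.
case: insubP => [b _ hb|]; last by lia.
apply: computes_basis => k; rewrite -rowE; apply/rowP => j.
rewrite run_cons /= !mxE -ha -hb.
have nab : (val a == val b) = false by apply/eqP; lia.
case: ifP => hja; rewrite ?mxE eqxx /= -!val_eqE /=.
  move/eqP: hja => hja; rewrite hja eqxx andTb.
  case: (val k =P val a) => [/val_inj ->|/eqP nka].
    by rewrite eqxx eq_sym nab addr0.
  by rewrite (eq_sym (val a)) (negbTE nka) add0r /= eq_sym.
have hja' : (val j == val a) = false := hja.
by rewrite hja' /= orbF eq_sym.
Qed.

Definition Qprog (IS IA : nat -> pred nat) N : seq (bitop N) :=
  flatten (map (sop N) [seq i <- iota 1 N.-1 | IS N i]) ++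
  flatten (map (aop N) [seq i <- iota 1 N.-1 | IA N i]).

Lemma Qprog_ok IS IA N : (0 < N)%N -> computes (Qprog IS IA N) (Qmx IS IA N).
Proof.
move=> N0; apply: computes_cat; apply: computes_foldr => i;
  rewrite mem_filter mem_iota => /andP[_ hi].
  by apply: sop_ok; lia.
by apply: aop_ok; lia.
Qed.

Lemma Qprog_size IS IA N : (size (Qprog IS IA N) <= 2 * N)%N.
Proof.
rewrite size_cat.
have h1 := size_flatten_le [seq i <- iota 1 N.-1 | IS N i] (size_sop N).
have h2 := size_flatten_le [seq i <- iota 1 N.-1 | IA N i] (size_aop N).
have h3 := count_size (IS N) (iota 1 N.-1).
have h4 := count_size (IA N) (iota 1 N.-1).
rewrite -size_filter size_iota in h3; rewrite -size_filter size_iota in h4.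
have h5 := leq_pred N.
rewrite mul2n -addnn; apply: leq_add.
  exact: leq_trans h1 (leq_trans h3 h5).
exact: leq_trans h2 (leq_trans h4 h5).
Qed.

Lemma f0_proof k (a : 'I_(2^k)) : (a.*2 < 2^k.+1)%N.
Proof. by rewrite expnS mul2n ltn_double. Qed.
Lemma f1_proof k (a : 'I_(2^k)) : (a.*2.+1 < 2^k.+1)%N.
Proof. by rewrite expnS mul2n ltn_Sdouble. Qed.
Definition f0 k (a : 'I_(2^k)) : 'I_(2^k.+1) := Ordinal (f0_proof a).
Definition f1 k (a : 'I_(2^k)) : 'I_(2^k.+1) := Ordinal (f1_proof a).
Lemma half_proof k (j : 'I_(2^k.+1)) : (j./2 < 2^k)%N.
Proof. by rewrite ltn_half_double -mul2n -expnS. Qed.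
Definition hf k (j : 'I_(2^k.+1)) : 'I_(2^k) := Ordinal (half_proof j).

Lemma f0_inj k : injective (@f0 k).
Proof. by move=> a b /(congr1 val) /= /(congr1 half); rewrite !doubleK => h; exact: ord_inj. Qed.
Lemma f1_inj k : injective (@f1 k).
Proof. by move=> a b /(congr1 val) /= /(congr1 half) /=; rewrite !uphalf_double => h; exact: ord_inj. Qed.
Lemma f01_neq k (a b : 'I_(2^k)) : f1 a != f0 b.
Proof. by apply/eqP => /(congr1 (odd \o val)) /=; rewrite !odd_double. Qed.

Lemma f_split k (j : 'I_(2^k.+1)) : j = if odd j then f1 (hf j) else f0 (hf j).
Proof.
have h := odd_double_half j; case: (odd j) in h *; apply: ord_inj => /=; rewrite /= in h; lia.
Qed.

Lemma f0_eq k a (i : 'I_(2^k.+1)) : (f0 a == i) = (~~ odd i && (a == hf i)).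
Proof.
rewrite {1}(f_split i); case: (odd i) => /=.
  by apply/negbTE; rewrite eq_sym; exact: f01_neq.
by rewrite (inj_eq (@f0_inj k)).
Qed.
Lemma f1_eq k a (i : 'I_(2^k.+1)) : (f1 a == i) = (odd i && (a == hf i)).
Proof.
rewrite {1}(f_split i); case: (odd i) => /=.
  by rewrite (inj_eq (@f1_inj k)).
by apply/negbTE; exact: f01_neq.
Qed.

Definition restr n N (f : 'I_n -> 'I_N) (x : 'rV['F_2]_N) : 'rV['F_2]_n := \row_a x 0 (f a).
Definition liftop n N (f : 'I_n -> 'I_N) (o : bitop n) : bitop N :=
  match o with XorI i j => XorI (f i) (f j) | SwapI i j => SwapI (f i) (f j) end.

Lemma run_lift n N (f : 'I_n -> 'I_N) (finj : injective f) p x :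
  restr f (run (map (liftop f) p) x) = run p (restr f x) /\
  forall k, (forall a, f a != k) -> run (map (liftop f) p) x 0 k = x 0 k.
Proof.
elim: p x => [|o p IH] x /=; first by [].
have [H1 H2] := IH (step x (liftop f o)); split.
  rewrite H1; congr (run p _); apply/rowP => a; move: H1 H2; case: o => i j H1 H2; rewrite /= !mxE !(inj_eq finj) //.
  by case: (a == i); case: (a == j).
move=> k hk; rewrite H2 //; clear H1 H2 IH.
have e : forall a, (k == f a) = false by move=> a; rewrite eq_sym; exact: negbTE (hk a).
by case: o => i j; rewrite /= !mxE !e.
Qed.

Definition bfs k (s : seq 'I_(2^k)) : seq (bitop (2^k.+1)) :=
  [seq XorI (f0 a) (f1 a) | a <- s].

Lemma bfs_run k (s : seq 'I_(2^k)) x : uniq s ->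
  restr (@f1 k) (run (bfs s) x) = restr (@f1 k) x /\
  restr (@f0 k) (run (bfs s) x) =
    restr (@f0 k) x + \row_a (if a \in s then x 0 (f1 a) else 0).
Proof.
elim: s x => [|a s IH] x /=.
  by move=> _; split => //; apply/rowP => b; rewrite !mxE addr0.
case/andP => nas us.
have [H1 H0] := IH (step x (XorI (f0 a) (f1 a))) us.
split.
  rewrite H1; apply/rowP => b; rewrite !mxE /= ?mxE.
  by rewrite (negbTE (f01_neq b a)).
rewrite H0; apply/rowP => b; rewrite !mxE /= ?mxE.
rewrite (inj_eq (@f0_inj k)) (negbTE (f01_neq b a)) in_cons.
case: (b =P a) => [->|_] /=; last by [].
by rewrite (negbTE nas) addr0.
Qed.

Lemma ord_div_cast k (e : (2^k.+1 = 2^k * 2)%N) (i : 'I_(2^k.+1)) :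
  @ord_div (2^k) 2 (cast_ord e i) = hf i.
Proof. by apply: ord_inj => /=; rewrite divn2. Qed.
Lemma ord_mod_cast k (e : (2^k.+1 = 2^k * 2)%N) (i : 'I_(2^k.+1)) :
  nat_of_ord (@ord_mod (2^k) 2 (cast_ord e i)) = odd i.
Proof. by rewrite /= modn2. Qed.
Lemma hf_f0 k a : hf (@f0 k a) = a.
Proof. by apply: ord_inj => /=; rewrite doubleK. Qed.
Lemma hf_f1 k a : hf (@f1 k a) = a.
Proof. by apply: ord_inj => /=; rewrite uphalf_double. Qed.

Lemma kron_step k (p : seq (bitop (2^k))) A : computes p A ->
  computes (bfs (ord_enum (2^k)) ++ map (liftop (@f0 k)) p ++ map (liftop (@f1 k)) p)
     (castmx (esym (expnSr 2 k), esym (expnSr 2 k)) (kron A Gpolar)).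
Proof.
move=> hp; apply: computes_basis => i.
rewrite !run_cat.
set u := delta_mx 0 i.
have [hw1 hw0] := bfs_run u (ord_enum_uniq (2^k)).
set w := run (bfs _) u in hw1 hw0 *.
have [hy0 hy0'] := run_lift (@f0_inj k) p w.
set y := run (map (liftop (@f0 k)) p) w in hy0 hy0' *.
have [hz1 hz1'] := run_lift (@f1_inj k) p y.
set z := run (map (liftop (@f1 k)) p) y in hz1 hz1' *.
have ez0 c : z 0 (f0 c) = (restr (@f0 k) w *m A) 0 c.
  rewrite hz1'; last by move=> a; exact: f01_neq.
  transitivity (restr (@f0 k) y 0 c); first by rewrite mxE.
  by rewrite hy0 hp.
have ez1 c : z 0 (f1 c) = (restr (@f1 k) w *m A) 0 c.
  transitivity (restr (@f1 k) z 0 c); first by rewrite mxE.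
  rewrite hz1 hp; congr ((_ *m A) 0 c); apply/rowP => a; rewrite !mxE hy0' //.
  by move=> b; rewrite eq_sym; exact: f01_neq.
have r0 : restr (@f0 k) u = if odd i then 0 else delta_mx 0 (hf i).
  by apply/rowP => a; rewrite !mxE f0_eq; case: (odd i); rewrite ?mxE.
have r1 : restr (@f1 k) u = if odd i then delta_mx 0 (hf i) else 0.
  by apply/rowP => a; rewrite !mxE f1_eq; case: (odd i); rewrite ?mxE.
have ew : \row_a (if a \in ord_enum (2^k) then u 0 (f1 a) else 0) = restr (@f1 k) u.
  by apply/rowP => a; rewrite !mxE mem_ord_enum.
rewrite ew r0 r1 in hw0; rewrite r1 in hw1.
rewrite -rowE; apply/rowP => j; rewrite [in RHS]mxE castmxE mxE !ord_div_cast mxE !ord_mod_cast.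
rewrite {1}(f_split j); case: ifP => oj.
  rewrite ez1 hw1 ?oj.
  by case: (odd i) => /=; rewrite ?mul0mx -?rowE !mxE ?mulr1 ?mulr0.
rewrite ez0 hw0 ?oj.
by case: (odd i) => /=; rewrite ?add0r ?addr0 ?mul0mx -?rowE !mxE ?mulr1 ?mulr0.
Qed.

Fixpoint prog (IS IA : nat -> pred nat) k : seq (bitop (2 ^ k)) :=
  match k with
  | 0 => [::]
  | k'.+1 => Qprog IS IA (2 ^ k'.+1) ++
      (bfs (ord_enum (2^k')) ++ map (liftop (@f0 k')) (prog IS IA k') ++
       map (liftop (@f1 k')) (prog IS IA k'))
  end.

Lemma prog_ok IS IA k : computes (prog IS IA k) (abs_mx IS IA k).
Proof.
elim: k => [|k IH] /=; first exact: computes_nil.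
apply: computes_cat; first by apply: Qprog_ok; rewrite expn_gt0.
exact: kron_step.
Qed.

Lemma prog_size IS IA k : (size (prog IS IA k) <= 4 * (2 ^ k * k))%N.
Proof.
elim: k => [|k IH] /=; first by [].
have h1 := Qprog_size IS IA (2 ^ k.+1).
have h2 : size (ord_enum (2^k)) = (2^k)%N.
  by rewrite -(size_map val) val_ord_enum size_iota.
rewrite /bfs !size_cat !size_map h2; rewrite expnS in h1 *; rewrite /Qprog size_cat in h1; nia.
Qed.

Theorem proposition1 :
  exists C : nat,
    forall (m : nat) (IS IA : nat -> pred nat),
      (1 <= m)%N -> abs_valid IS IA m ->
      exists p : seq (bitop (2 ^ m)),
        (size p <= C * (2 ^ m * m))%N /\
        forall u : 'rV['F_2]_(2 ^ m), run p u = u *m abs_mx IS IA m.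
Proof.
exists 4 => m IS IA _ _; exists (prog IS IA m); split.
  exact: prog_size.
exact: prog_ok.
Qed.
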